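(* Let $\gamma \in (0,1/6]$, let $n \geq 6$ be an integer, and let $\eta \geq \eta_1 := \max\{n, \frac{32}{\gamma^2}\log(3/\gamma)\}$. Then there exists a dataset $x_1,\dots,x_n$ (in $\mathbb{R}^d$ for some $d$) with $\|x_i\|\le 1$ for all $i$, linearly separable with maximum margin $\gamma$, such that for every integer $t$ with $1 \le t \leq n/(16\gamma)$ there exists $i \in [n]$ with $\langle w_t, x_i\rangle < 0$, where $(w_t)$ is gradient descent with step size $\eta$ on this dataset.
   Context: All labels are $+1$. Linear separability: some $w$ has $\langle w,x_i\rangle>0$ for all $i$. Maximum margin: $\max_{\|w\|=1}\min_i\langle w,x_i\rangle$. Loss $F(w) = \frac{1}{n}\sum_{i=1}^n \log(1+\exp(-\langle w, x_i\rangle))$. Gradient descent with constant step size $\eta$: $w_0 = 0$, $w_{t+1} = w_t - \eta\nabla F(w_t)$. *)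

(* Defs.v *)
From Stdlib Require Import Reals List.
From Coquelicot Require Import Coquelicot.
Import ListNotations.
Open Scope R_scope.

(* Vectors in R^d are functions nat -> R; only coordinates 0..d-1 matter. *)
Definition dot (d : nat) (u v : nat -> R) : R :=
  fold_right Rplus 0 (map (fun k => u k * v k) (seq 0 d)).

Definition vnorm (d : nat) (u : nat -> R) : R := sqrt (dot d u u).

(* Dataset x_0, ..., x_{n-1}, all labels +1. Logistic empirical risk. *)
Definition loss (d n : nat) (x : nat -> nat -> R) (w : nat -> R) : R :=
  / INR n * fold_right Rplus 0
    (map (fun i => ln (1 + exp (- dot d w (x i)))) (seq 0 n)).

Definition grad (d n : nat) (x : nat -> nat -> R) (w : nat -> R) : nat -> R :=
  fun j => Derive (fun s => loss d n x (fun k => if Nat.eqb k j then w k + s else w k)) 0.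

Fixpoint gd (d n : nat) (x : nat -> nat -> R) (eta : R) (t : nat) : nat -> R :=
  match t with
  | O => fun _ => 0
  | S t' => fun j => gd d n x eta t' j - eta * grad d n x (gd d n x eta t') j
  end.

Definition lin_separable (d n : nat) (x : nat -> nat -> R) : Prop :=
  exists w : nat -> R, forall i, (i < n)%nat -> dot d w (x i) > 0.

Definition max_margin (d n : nat) (x : nat -> nat -> R) (gamma : R) : Prop :=
  (exists w : nat -> R, vnorm d w = 1 /\
      forall i, (i < n)%nat -> gamma <= dot d w (x i)) /\
  (forall w : nat -> R, vnorm d w = 1 ->
      exists i, (i < n)%nat /\ dot d w (x i) <= gamma).

(* Main.v *)
Require Import Defs.
From Stdlib Require Import Reals List Lra Lia Psatz.
From Coquelicot Require Import Coquelicot.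
Open Scope R_scope.

Definition sig (m : R) : R := exp (- m) / (1 + exp (- m)).

Lemma sig_bounds m : 0 <= sig m <= 1.
Proof.
  unfold sig. pose proof (exp_pos (-m)). split.
  - apply Rmult_le_pos; [lra|]. left; apply Rinv_0_lt_compat; lra.
  - apply Rmult_le_reg_r with (1 + exp (-m)); [lra|].
    unfold Rdiv. rewrite Rmult_assoc, Rinv_l by lra. lra.
Qed.

Lemma sig0 : sig 0 = 1/2.
Proof. unfold sig. rewrite Ropp_0, exp_0. field. Qed.

Lemma is_derive_sumln (a b : nat -> R) (l : list nat) (s : R) :
  is_derive (fun s => fold_right Rplus 0 (map (fun i => ln (1 + exp (-(a i + s * b i)))) l)) s
    (fold_right Rplus 0 (map (fun i => - b i * sig (a i + s * b i)) l)).
Proof.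
  induction l as [|i l IH]; simpl.
  - auto_derive; auto.
  - apply (is_derive_plus (fun s => ln (1 + exp (-(a i + s * b i))))); [|exact IH].
    pose proof (exp_pos (-(a i + s * b i))).
    auto_derive.
    + lra.
    + unfold sig. field. lra.
Qed.

Lemma dot2 u v : dot 2 u v = u 0%nat * v 0%nat + u 1%nat * v 1%nat.
Proof. unfold dot. simpl. ring. Qed.

Lemma grad2 n (x : nat -> nat -> R) w j : (j < 2)%nat ->
  grad 2 n x w j = - / INR n *
    fold_right Rplus 0 (map (fun i => sig (dot 2 w (x i)) * x i j) (seq 0 n)).
Proof.
  intros Hj. unfold grad, loss.
  assert (E : forall s, (fun k => if Nat.eqb k j then w k + s else w k) =
     (fun k => if Nat.eqb k j then w k + s else w k)) by reflexivity.
  rewrite (Derive_ext _ (fun s => / INR n * fold_right Rplus 0 (map (fun i => ln (1 + exp (-(dot 2 w (x i) + s * x i j)))) (seq 0 n)))).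
  2:{ intros s. f_equal. f_equal. apply map_ext. intros i. rewrite !dot2.
      destruct j as [|[|j]]; simpl; try lia; do 3 f_equal; ring. }
  erewrite is_derive_unique.
  2:{ apply is_derive_scal. apply is_derive_sumln. }
  assert (H : forall l, fold_right Rplus 0 (map (fun i => - x i j * sig (dot 2 w (x i) + 0 * x i j)) l)
     = - fold_right Rplus 0 (map (fun i => sig (dot 2 w (x i)) * x i j) l)).
  { induction l; simpl. ring. rewrite IHl, Rmult_0_l, Rplus_0_r. ring. }
  rewrite H. ring.
Qed.

Definition X (g : R) : nat -> nat -> R :=
  fun i k => if Nat.eqb k 0 then g else if Nat.eqb i 0 then - g else 1/2.

Lemma sum_minus (f h : nat -> R) l :
  fold_right Rplus 0 (map f l) - fold_right Rplus 0 (map h l) =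
  fold_right Rplus 0 (map (fun i => f i - h i) l).
Proof. induction l; simpl. ring. rewrite <- IHl. ring. Qed.

Lemma sum_le_const (f : nat -> R) c l :
  (forall i, In i l -> f i <= c) ->
  fold_right Rplus 0 (map f l) <= INR (length l) * c.
Proof.
  induction l as [|a l IH]; intros H. simpl; lra. cbn [map fold_right length].
  simpl length. rewrite S_INR.
  assert (f a <= c) by (apply H; left; auto).
  assert (fold_right Rplus 0 (map f l) <= INR (length l) * c) by (apply IH; intros; apply H; right; auto).
  lra.
Qed.

Lemma gd_step n x eta t j : (j < 2)%nat -> (0 < n)%nat ->
  gd 2 n x eta (S t) j = gd 2 n x eta t j + eta / INR n *
    fold_right Rplus 0 (map (fun i => sig (dot 2 (gd 2 n x eta t) (x i)) * x i j) (seq 0 n)).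
Proof.
  intros Hj Hn. simpl. rewrite grad2 by auto.
  assert (0 < INR n) by (apply lt_0_INR; lia). field. lra.
Qed.

Definition D (g : R) (n : nat) (w : nat -> R) :=
  fold_right Rplus 0 (map (fun i => sig (dot 2 w (X g i)) * (X g i 0%nat - X g i 1%nat)) (seq 0 n)).

Lemma m_step g n eta t : (0 < n)%nat ->
  dot 2 (gd 2 n (X g) eta (S t)) (X g 0%nat) =
  dot 2 (gd 2 n (X g) eta t) (X g 0%nat) + eta / INR n * g * D g n (gd 2 n (X g) eta t).
Proof.
  intros Hn. rewrite !dot2, !gd_step by (auto; lia).
  assert (E : D g n (gd 2 n (X g) eta t) = fold_right Rplus 0 (map (fun i => sig (dot 2 (gd 2 n (X g) eta t) (X g i)) * X g i 0%nat) (seq 0 n)) - fold_right Rplus 0 (map (fun i => sig (dot 2 (gd 2 n (X g) eta t) (X g i)) * X g i 1%nat) (seq 0 n))).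
  { rewrite sum_minus. unfold D. apply f_equal, map_ext. intros; ring. }
  rewrite E. change (X g 0%nat 0%nat) with g. change (X g 0%nat 1%nat) with (-g). ring.
Qed.

Lemma D_split g n' w :
  D g (S n') w = sig (dot 2 w (X g 0%nat)) * (2 * g) +
    fold_right Rplus 0 (map (fun i => sig (dot 2 w (X g i)) * (g - 1/2)) (seq 1 n')).
Proof.
  unfold D. simpl seq. simpl map. simpl fold_right. f_equal.
  - unfold X; simpl. ring.
  - apply f_equal. apply map_ext_in. intros i Hi. apply in_seq in Hi.
    unfold X. destruct i; [lia|]. simpl. ring.
Qed.

Lemma D_le g n' w : 0 < g <= 1/6 -> D g (S n') w <= 2 * g.
Proof.
  intros Hg. rewrite D_split.
  pose proof (sig_bounds (dot 2 w (X g 0%nat))).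
  assert (fold_right Rplus 0 (map (fun i => sig (dot 2 w (X g i)) * (g - 1/2)) (seq 1 n')) <= INR (length (seq 1 n')) * 0).
  { apply sum_le_const. intros i _. pose proof (sig_bounds (dot 2 w (X g i))). nra. }
  nra.
Qed.

Lemma D_0 g n' : D g (S n') (fun _ => 0) <= g + INR n' * ((g - 1/2)/2).
Proof.
  rewrite D_split.
  replace (dot 2 (fun _ => 0) (X g 0%nat)) with 0 by (rewrite dot2; ring).
  rewrite sig0.
  assert (fold_right Rplus 0 (map (fun i => sig (dot 2 (fun _ => 0) (X g i)) * (g - 1/2)) (seq 1 n')) <= INR (length (seq 1 n')) * ((g-1/2)/2)).
  { apply sum_le_const. intros i _. replace (dot 2 (fun _ => 0) (X g i)) with 0 by (rewrite dot2; ring).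
    rewrite sig0. lra. }
  rewrite length_seq in H. lra.
Qed.

Theorem lemma11 (gamma : R) (n : nat) (eta : R) :
  0 < gamma -> gamma <= 1 / 6 -> (6 <= n)%nat ->
  Rmax (INR n) (32 / gamma ^ 2 * ln (3 / gamma)) <= eta ->
  exists (d : nat) (x : nat -> nat -> R),
    (forall i, (i < n)%nat -> vnorm d (x i) <= 1) /\
    lin_separable d n x /\
    max_margin d n x gamma /\
    (forall t : nat, (1 <= t)%nat -> INR t <= INR n / (16 * gamma) ->
       exists i, (i < n)%nat /\ dot d (gd d n x eta t) (x i) < 0).
Proof.
  intros Hg0 Hg1 Hn Heta.
  assert (Hneta : INR n <= eta) by (eapply Rle_trans; [apply Rmax_l|exact Heta]).
  assert (Hn6 : 6 <= INR n) by (replace 6 with (INR 6) by (simpl; lra); apply le_INR; lia).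
  set (e0 := fun k : nat => if Nat.eqb k 0 then 1 else 0).
  assert (He0 : forall i, dot 2 e0 (X gamma i) = gamma).
  { intros i. rewrite dot2. unfold e0, X. simpl. ring. }
  exists 2%nat, (X gamma). split; [|split; [|split]].
  - intros i _. unfold vnorm. rewrite <- sqrt_1. apply sqrt_le_1_alt.
    rewrite dot2. unfold X. simpl. destruct (Nat.eqb i 0); nra.
  - exists e0. intros i _. rewrite He0. lra.
  - split.
    + exists e0. split.
      * unfold vnorm. rewrite dot2. unfold e0. simpl. replace (1*1+0*0) with 1 by ring. apply sqrt_1.
      * intros i _. rewrite He0. lra.
    + intros w Hw. unfold vnorm in Hw.
      assert (Hw2 : dot 2 w w = 1).
      { assert (0 <= dot 2 w w) by (rewrite dot2; nra).
        rewrite <- (sqrt_sqrt (dot 2 w w)) by auto. rewrite Hw. ring. }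
      rewrite dot2 in Hw2.
      destruct (Rle_dec (dot 2 w (X gamma 0%nat)) gamma) as [Hle|Hgt].
      * exists 0%nat. split; [lia|auto].
      * exists 1%nat. split; [lia|]. rewrite dot2 in *. unfold X in *. simpl in *.
        apply Rnot_le_lt in Hgt. apply Rnot_lt_le. intro Hc.
        assert (A : w 0%nat - w 1%nat > 1).
        { apply Rmult_lt_reg_l with gamma; [lra|]. nra. }
        assert (B : w 1%nat > 2 * gamma * (1 - w 0%nat)) by nra.
        assert (C : (w 0%nat - 1) * (1 + 2 * gamma) > 0) by nra.
        assert (w 0%nat > 1) by nra. nra.
  - destruct n as [|n']; [lia|].
    assert (HnS : INR (S n') = INR n' + 1) by apply S_INR.
    assert (Hpos : 0 < eta / INR (S n') * gamma).
    { apply Rmult_lt_0_compat; [|lra]. apply Rdiv_lt_0_compat; lra. }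
    assert (Hind : forall k, dot 2 (gd 2 (S n') (X gamma) eta (S k)) (X gamma 0%nat) <=
              eta / INR (S n') * gamma * (gamma + INR n' * ((gamma - 1/2)/2) + INR k * (2*gamma))).
    { induction k as [|k IH].
      - rewrite m_step by lia. simpl (gd 2 (S n') (X gamma) eta 0).
        replace (dot 2 (fun _ => 0) (X gamma 0%nat)) with 0 by (rewrite dot2; ring).
        pose proof (D_0 gamma n'). change (INR 0) with 0. nra.
      - rewrite m_step by lia. rewrite (S_INR k).
        pose proof (D_le gamma n' (gd 2 (S n') (X gamma) eta (S k)) (conj Hg0 Hg1)).
        assert (eta / INR (S n') * gamma * D gamma (S n') (gd 2 (S n') (X gamma) eta (S k)) <= eta / INR (S n') * gamma * (2 * gamma)) by (apply Rmult_le_compat_l; lra).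
        lra. }
    intros t Ht1 Ht. destruct t as [|k]; [lia|].
    exists 0%nat. split; [lia|].
    eapply Rle_lt_trans; [apply Hind|].
    rewrite S_INR in Ht.
    assert (H16 : 16 * gamma * (INR k + 1) <= INR (S n')).
    { apply Rmult_le_reg_r with (/ (16 * gamma)). apply Rinv_0_lt_compat; lra.
      replace (16 * gamma * (INR k + 1) * / (16 * gamma)) with (INR k + 1) by (field; lra).
      exact Ht. }
    assert (Hin : gamma + INR n' * ((gamma - 1/2)/2) + INR k * (2*gamma) < 0).
    { assert (5 <= INR n') by (replace 5 with (INR 5) by (simpl; lra); apply le_INR; lia).
      nra. }
    nra.
Qed.
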